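(* Let $\mathcal C\subseteq\mathcal L_{n,q}$ be an $\mathbb F_{q^n}$-linear code of dimension $k$. Then $(\mathcal C^{[i]})^{\perp}=(\mathcal C^{\perp})^{[i]}$ for each $i\in\{0,\ldots,n-1\}$. Consequently $h(\mathcal C^\perp)=n-2k+h(\mathcal C)$.
   Context: $q$ is a prime power, $[i]:=q^i$. $\mathcal L_{n,q}$ is the $\mathbb F_{q^n}$-vector space of linearized polynomials $f(x)=\sum_{i=0}^{n-1}f_ix^{[i]}$, $f_i\in\mathbb F_{q^n}$. For $f(x)=\sum_i f_ix^{[i]}$, $f(x)^{[j]}:=x^{[j]}\circ f(x)=\sum_i f_i^{[j]}x^{[(i+j)\bmod n]}$, and $\mathcal C^{[j]}=\{f^{[j]}\colon f\in\mathcal C\}$. The Delsarte dual is $\mathcal C^\perp=\{f\in\mathcal L_{n,q}\colon b(f,g)=0\ \forall g\in\mathcal C\}$, where $b(f,g)=\mathrm{Tr}_{q^n/q}\big(\sum_{i=0}^{n-1}f_ig_i\big)$ and $\mathrm{Tr}_{q^n/q}(x)=x+x^{[1]}+\cdots+x^{[n-1]}$. For a code $\mathcal C$, $h(\mathcal C):=\max\{\dim(\mathcal C\cap\mathcal C^{[j]})\colon j=1,\ldots,n-1,\ \gcd(j,n)=1\}$. *)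

(* Defs.v *)
From HB Require Import structures.
From mathcomp Require Import all_boot all_order all_algebra.
Set Implicit Arguments. Unset Strict Implicit. Unset Printing Implicit Defensive.
Import GRing.Theory.
Local Open Scope ring_scope.

(* L plays the role of F_{q^n}; a linearized polynomial
   f = sum_{i<n} f_i x^[i] is represented by its coefficient row vector
   (f_0,...,f_{n-1}) : 'rV[L]_n.  F_{q^n}-linear codes are L-subspaces
   {vspace 'rV[L]_n}. *)

Section LinPoly.
Variables (L : finFieldType) (q n : nat).

Definition trq (x : L) : L := \sum_(i < n) x ^+ (q ^ i).

Definition bform (f g : 'rV[L]_n) : L := trq (\sum_(i < n) f 0 i * g 0 i).

(* f^[j] = sum_i f_i^[j] x^[(i+j) mod n]: the coefficient at position k is
   the (unique) f_i^[j] with (i + j) mod n = k. *)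
Definition frobc (j : nat) (f : 'rV[L]_n) : 'rV[L]_n :=
  \row_(k < n) \sum_(i < n | ((i + j) %% n)%N == k) f 0 i ^+ (q ^ j).

Definition conjc (C : {vspace 'rV[L]_n}) (j : nat) : {vspace 'rV[L]_n} :=
  <<[seq frobc j f | f <- enum 'rV[L]_n & f \in C]>>%VS.

Definition ddual (C : {vspace 'rV[L]_n}) : {vspace 'rV[L]_n} :=
  <<[seq f <- enum 'rV[L]_n |
      [forall g : 'rV[L]_n, (g \in C) ==> (bform f g == 0 :> L)%R]]>>%VS.

Definition hinv (C : {vspace 'rV[L]_n}) : nat :=
  \max_(j < n | (0 < j)%N && coprime j n) \dim (C :&: conjc C j).

End LinPoly.

(* Main.v *)
Require Import Defs.
From HB Require Import structures.
From mathcomp Require Import all_boot all_order all_algebra all_field.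
From mathcomp Require Import zify.
Import GRing.Theory.
Local Open Scope ring_scope.

Set Implicit Arguments. Unset Strict Implicit. Unset Printing Implicit Defensive.

Lemma span_closed (K : fieldType) (V : vectType K) (P : V -> Prop) (X : seq V) :
  P 0 -> (forall x y, P x -> P y -> P (x + y)) ->
  (forall a x, P x -> P (a *: x)) -> (forall x, x \in X -> P x) ->
  forall f, f \in <<X>>%VS -> P f.
Proof.
move=> P0 PD PZ PX f /(@coord_span _ _ _ (in_tuple X)) ->.
elim/big_ind: _ => // i _; apply: PZ; apply: PX; exact: mem_nth.
Qed.

Section Dot.
Variable L : finFieldType.

Definition dot m (f g : 'rV[L]_m) : L := \sum_(i < m) f 0 i * g 0 i.

Lemma dotC m (f g : 'rV[L]_m) : dot f g = dot g f.
Proof. by apply: eq_bigr => i _; rewrite mulrC. Qed.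
Lemma dotDl m (f g h : 'rV[L]_m) : dot (f + g) h = dot f h + dot g h.
Proof. by rewrite /dot -big_split; apply: eq_bigr => i _; rewrite mxE mulrDl. Qed.
Lemma dotZl m a (f h : 'rV[L]_m) : dot (a *: f) h = a * dot f h.
Proof. by rewrite /dot mulr_sumr; apply: eq_bigr => i _; rewrite mxE mulrA. Qed.
Lemma dot0l m (h : 'rV[L]_m) : dot 0 h = 0.
Proof. by rewrite /dot big1 // => i _; rewrite mxE mul0r. Qed.
Lemma dotDr m (f g h : 'rV[L]_m) : dot h (f + g) = dot h f + dot h g.
Proof. by rewrite !(dotC h) dotDl. Qed.
Lemma dotZr m a (f h : 'rV[L]_m) : dot h (a *: f) = a * dot h f.
Proof. by rewrite !(dotC h) dotZl. Qed.
Lemma dot0r m (h : 'rV[L]_m) : dot h 0 = 0.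
Proof. by rewrite dotC dot0l. Qed.
Lemma dot_sumr m (I : finType) (F : I -> 'rV[L]_m) h :
  dot h (\sum_i F i) = \sum_i dot h (F i).
Proof. by apply: (big_morph (dot h)) => [f g|]; rewrite ?dotDr ?dot0r. Qed.

Lemma dot_delta m (w : 'rV[L]_m) : (forall f, dot f w = 0) -> w = 0.
Proof.
move=> H; apply/rowP => j; rewrite mxE -(H (delta_mx 0 j)) /dot.
rewrite (bigD1 j) //= big1 ?addr0 => [|i ij]; rewrite !mxE ?eqxx /=.
  by rewrite mul1r.
by rewrite (negbTE ij) mul0r.
Qed.

End Dot.

Section Perp.
Variable L : finFieldType.

Definition Bm m (D : {vspace 'rV[L]_m}) : 'M[L]_(m, \dim D) :=
  \matrix_(j, i) (vbasis D)`_i 0 j.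
Definition phi m (D : {vspace 'rV[L]_m}) : 'Hom('rV[L]_m, 'rV[L]_(\dim D)) :=
  linfun (@mulmxr L 1 m (\dim D) (Bm D)).
Definition perp m (D : {vspace 'rV[L]_m}) : {vspace 'rV[L]_m} := lker (phi D).
Lemma phiE m (D : {vspace 'rV[L]_m}) f : phi D f = f *m Bm D.
Proof. by rewrite /phi lfunE. Qed.

Lemma BmE m (D : {vspace 'rV[L]_m}) f : f *m Bm D = \row_i dot f (vbasis D)`_i.
Proof. by apply/rowP => i; rewrite !mxE; apply: eq_bigr => j _; rewrite mxE. Qed.

Lemma perpP m (D : {vspace 'rV[L]_m}) f :
  reflect (forall g, g \in D -> dot f g = 0) (f \in perp D).
Proof.
rewrite /perp memv_ker phiE BmE; apply: (iffP eqP) => [H g gD|H].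
  rewrite (coord_vbasis gD) dot_sumr big1 // => i _.
  by rewrite dotZr; move/rowP: H => /(_ i); rewrite !mxE => ->; rewrite mulr0.
apply/rowP => i; rewrite !mxE H //; apply: vbasis_mem; apply: mem_nth.
by rewrite size_tuple.
Qed.

Lemma dim_rV m : \dim (fullv : {vspace 'rV[L]_m}) = m.
Proof. by rewrite dimvf /dim /= mul1n. Qed.

Lemma dim_perp_ge m (D : {vspace 'rV[L]_m}) : (m <= \dim (perp D) + \dim D)%N.
Proof.
have := limg_ker_dim (phi D) fullv.
rewrite capfv dim_rV => E.
apply: (@leq_trans (\dim (perp D) + \dim (phi D @: fullv))); first by rewrite E.
rewrite leq_add2l -[X in (_ <= X)%N](dim_rV (\dim D)).
exact/dimvS/subvf.
Qed.

Lemma dim_perp m (D : {vspace 'rV[L]_m}) : (\dim (perp D) + \dim D)%N = m.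
Proof.
have := limg_ker_dim (phi D) fullv.
rewrite capfv dim_rV => E; rewrite -[RHS]E; congr (_ + _)%N.
set U := (_ @: _)%VS.
have le : (\dim U <= \dim D)%N by rewrite -[X in (_ <= X)%N](dim_rV (\dim D)); exact/dimvS/subvf.
apply/eqP; rewrite eqn_leq le ?andbT ?andTb leqNgt; apply/negP => hlt.
have := dim_perp_ge U.
have nz : perp U != 0%VS.
  by rewrite -dimv_eq0; apply/eqP => E0; move: (dim_perp_ge U); rewrite E0 add0n => H; move: (leq_ltn_trans H hlt); rewrite ltnn.
set c := vpick (perp U).
have cU : c \in perp U by apply: memv_pick.
have c0 : c != 0 by rewrite vpick0.
move=> _; move/eqP: c0; apply.
set w := \sum_i c 0 i *: (vbasis D)`_i.
have w0 : w = 0.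
  apply: dot_delta => f.
  have fU : f *m Bm D \in U.
    by rewrite -phiE; apply: memv_img; apply: memvf.
  move/perpP: cU => /(_ _ fU); rewrite BmE => H0.
  rewrite -H0 /w dot_sumr {2}/dot; apply: eq_bigr => i _; rewrite dotZr mxE.
  done.
have /freeP := basis_free (vbasisP D).
move=> /(_ (fun i => c 0 i) w0) H; apply/rowP => i; rewrite H mxE //.
Qed.

End Perp.

Section Frob.
Variables (L : finFieldType) (q n : nat).
Hypothesis qchar : (GRing.pchar L).-nat q.
Hypothesis q1 : (1 < q)%N.
Hypothesis hn : (0 < n)%N.
Hypothesis hL : #|L| = (q ^ n)%N.

Implicit Types f g : 'rV[L]_n.

Definition sig j (x : L) := x ^+ (q ^ j).

Lemma sigD j x y : sig j (x + y) = sig j x + sig j y.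
Proof. by rewrite /sig exprDn_pchar // pnatX qchar. Qed.
Lemma sigM j x y : sig j (x * y) = sig j x * sig j y.
Proof. by rewrite /sig exprMn. Qed.
Lemma sig0 j : sig j 0 = 0.
Proof. by rewrite /sig expr0n expn_eq0; case: q q1. Qed.
Lemma sig_eq0 j x : (sig j x == 0) = (x == 0).
Proof. by rewrite /sig expf_eq0 expn_gt0; case: q q1. Qed.
Lemma sig_inj j : injective (sig j).
Proof.
move=> x y E; apply/eqP; rewrite -subr_eq0 -(sig_eq0 j).
have := sigD j (x - y) y; rewrite subrK E => H.
by apply/eqP; apply: (addIr (sig j y)); rewrite add0r -H.
Qed.
Lemma sig_surj j a : exists b, a = sig j b.
Proof.
have [g _ gK] := injF_bij (@sig_inj j).
by exists (g a); rewrite gK.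
Qed.
Lemma sig_sum j (I : finType) (F : I -> L) : sig j (\sum_i F i) = \sum_i sig j (F i).
Proof. exact: (big_morph (sig j) (sigD j) (sig0 j)). Qed.

Definition sh j (i : 'I_n) : 'I_n := Ordinal (ltn_pmod (i + j) hn).

Lemma sh_inj j : injective (sh j).
Proof.
move=> i i' /(congr1 val) /= /eqP; rewrite eqn_modDr !modn_small //.
by move/eqP/val_inj.
Qed.

Lemma frobcE j f i : frobc q j f 0 (sh j i) = sig j (f 0 i).
Proof.
rewrite mxE (big_pred1 i) // => i' /=.
by rewrite -[_ == _ :> nat]/(sh j i' == sh j i) (inj_eq (@sh_inj j)).
Qed.

Lemma sh_surj j k : exists i, k = sh j i.
Proof. have [g _ gK] := injF_bij (@sh_inj j); by exists (g k); rewrite gK. Qed.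

Lemma frobcD j f g : frobc q j (f + g) = frobc q j f + frobc q j g.
Proof.
apply/rowP => k; have [i ->] := sh_surj j k.
by rewrite [RHS]mxE !frobcE mxE sigD.
Qed.
Lemma frobcZ j a f : frobc q j (a *: f) = sig j a *: frobc q j f.
Proof.
apply/rowP => k; have [i ->] := sh_surj j k.
by rewrite [RHS]mxE !frobcE mxE sigM.
Qed.
Lemma frobc0 j : frobc q j (0 : 'rV[L]_n) = 0.
Proof. by rewrite -(scale0r 0) frobcZ sig0 !scale0r. Qed.
Lemma frobc_inj j : injective (@frobc L q n j).
Proof.
move=> f g E; apply/rowP => i; apply: (@sig_inj j).
by rewrite -!frobcE E.
Qed.
Lemma frobc_surj j f : exists g, f = frobc q j g.
Proof. have [h _ hK] := injF_bij (@frobc_inj j); by exists (h f); rewrite hK. Qed.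

Lemma dot_frobc j f g : dot (frobc q j f) (frobc q j g) = sig j (dot f g).
Proof.
rewrite /dot (reindex_inj (@sh_inj j)) sig_sum; apply: eq_bigr => i _.
by rewrite !frobcE sigM.
Qed.


Lemma trq_nz : exists x : L, trq q n x != 0.
Proof.
have [x Hx|H0] := pickP (fun x : L => trq q n x != 0); first by exists x.
have H : forall x : L, trq q n x = 0 by move=> x; move: (H0 x) => /= /negbFE/eqP.
pose P : {poly L} := \sum_(i < n) 'X^(q ^ i).
have Pev x : P.[x] = trq q n x.
  by rewrite /P horner_sum; apply: eq_bigr => i _; rewrite hornerXn.
have Pc m : P`_m = \sum_(i < n) ((m == q ^ i)%N%:R : L).
  by rewrite /P coef_sum; apply: eq_bigr => i _; rewrite coefXn.
have q0 : (0 < q)%N by apply: ltnW.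
have lt : (n.-1 < n)%N by rewrite ltn_predL.
have Pnz : P != 0.
  apply/eqP => /(congr1 (fun p : {poly L} => p`_(q ^ n.-1))) /eqP.
  rewrite Pc coef0 (bigD1 (Ordinal lt)) //= eqxx big1 => [|i /eqP ni].
    by rewrite addr0 oner_eq0.
  rewrite eqn_exp2l //.
  case: eqP => // e; case: ni; apply: val_inj => /=; by rewrite e.
have Psz : (size P <= (q ^ n.-1).+1)%N.
  apply/leq_sizeP => m hm; rewrite Pc big1 // => i _.
  case: eqP => // e; move: hm; rewrite e ltnNge leq_pexp2l //.
  by rewrite -ltnS prednK.
have := max_poly_roots Pnz _ (enum_uniq L).
rewrite -cardE hL.
have -> : all (root P) (enum L).
  by apply/allP => x _; rewrite /root Pev H.
move=> /(_ isT) /leq_trans /(_ Psz).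
rewrite -{1}(prednK hn) expnS ltnS leqNgt ltn_Pmull //.
by rewrite expn_gt0 q0.
Qed.

Lemma trq_nondeg (x : L) : (forall a, trq q n (a * x) = 0) -> x = 0.
Proof.
move=> H; apply/eqP; apply/negP => /negP x0.
have [y /eqP Hy] := trq_nz; apply: Hy.
by rewrite -(H (y / x)) mulfVK.
Qed.

Lemma trq0 : trq q n (0 : L) = 0.
Proof.
rewrite /trq big1 // => i _; rewrite expr0n expn_eq0.
by case: q q1.
Qed.


Implicit Types C D X : {vspace 'rV[L]_n}.

Lemma ddualP D f : reflect (forall g, g \in D -> dot f g = 0) (f \in ddual q D).
Proof.
apply: (iffP idP).
  move=> fD g gD.
  apply: (span_closed (P := fun f => dot f g = 0)) fD.
  - exact: dot0l.
  - by move=> x y Hx Hy; rewrite dotDl Hx Hy addr0.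
  - by move=> a x Hx; rewrite dotZl Hx mulr0.
  move=> x; rewrite mem_filter => /andP [/forallP H _].
  apply: trq_nondeg => a; rewrite -dotZr.
  move: (H (a *: g)); rewrite memvZ //= => /eqP.
  by rewrite /bform.
move=> H; apply: memv_span; rewrite mem_filter mem_enum andbT.
apply/forallP => g; apply/implyP => gD; apply/eqP.
have -> : bform q f g = trq q n (dot f g) by [].
by rewrite H // trq0.
Qed.

Lemma conjcP C j f :
  reflect (exists2 g, g \in C & f = frobc q j g) (f \in conjc q C j).
Proof.
apply: (iffP idP); last first.
  move=> [g gC ->]; apply: memv_span; apply: map_f.
  by rewrite mem_filter gC mem_enum.
apply: (span_closed (P := fun f => exists2 g, g \in C & f = frobc q j g)).
- by exists 0; rewrite ?mem0v ?frobc0.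
- move=> x y [g1 g1C ->] [g2 g2C ->]; exists (g1 + g2); first exact: memvD.
  by rewrite frobcD.
- move=> a x [g gC ->]; have [b ->] := sig_surj j a.
  by exists (b *: g); rewrite ?memvZ ?frobcZ.
move=> x /mapP [g]; rewrite mem_filter mem_enum andbT => gC ->.
by exists g.
Qed.

Lemma dual_conj C j : ddual q (conjc q C j) = conjc q (ddual q C) j.
Proof.
apply/vspaceP => f; apply/idP/idP.
  move/ddualP => H; have [g fg] := frobc_surj j f; rewrite fg in H *.
  apply/conjcP; exists g => //; apply/ddualP => c cC.
  apply: (@sig_inj j); rewrite sig0 -dot_frobc; apply: H.
  by apply/conjcP; exists c.
move/conjcP => [g /ddualP gD ->]; apply/ddualP => h /conjcP [c cC ->].
by rewrite dot_frobc gD // sig0.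
Qed.

Lemma ddual_perp D : ddual q D = perp D.
Proof.
apply/vspaceP => f; apply/idP/idP.
  by move/ddualP => H; apply/perpP.
by move/perpP => H; apply/ddualP.
Qed.

Lemma dim_ddual D : (\dim (ddual q D) + \dim D)%N = n.
Proof. by rewrite ddual_perp dim_perp. Qed.

Lemma frobc_sum j (I : finType) (F : I -> 'rV[L]_n) :
  frobc q j (\sum_i F i) = \sum_i frobc q j (F i).
Proof. exact: (big_morph (frobc q j) (frobcD j) (frobc0 j)). Qed.

Lemma dim_conj_le X j : (\dim (conjc q X j) <= \dim X)%N.
Proof.
have S : (conjc q X j <= <<map (frobc q j) (vbasis X)>>)%VS.
  apply/subvP => f /conjcP [g gX ->].
  rewrite (coord_vbasis gX) frobc_sum; apply: memv_suml => i _.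
  rewrite frobcZ; apply: memvZ; apply: memv_span; apply: map_f.
  by apply: mem_nth; rewrite size_tuple.
apply: leq_trans (dimvS S) _; apply: leq_trans (dim_span _) _.
by rewrite size_map size_tuple.
Qed.

Lemma dim_conj X j : \dim (conjc q X j) = \dim X.
Proof.
apply/eqP; rewrite eqn_leq dim_conj_le /=.
have h1 := dim_ddual (conjc q X j); have h2 := dim_ddual X.
rewrite dual_conj in h1; have h3 := dim_conj_le (ddual q X) j.
move: h1 h2 h3; set a := \dim (conjc q (ddual q X) j); set b := \dim (ddual q X).
set c := \dim (conjc q X j); set d := \dim X; lia.
Qed.

Lemma term_eq C j :
  (\dim (ddual q C :&: conjc q (ddual q C) j) + 2 * \dim C =
   n + \dim (C :&: conjc q C j))%N.
Proof.
rewrite -dual_conj.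
have -> : (ddual q C :&: ddual q (conjc q C j) = ddual q (C + conjc q C j))%VS.
  apply/vspaceP => f; rewrite memv_cap; apply/andP/idP.
    move=> [/ddualP H1 /ddualP H2]; apply/ddualP => g /memv_addP [u uC [v vC ->]].
    by rewrite dotDr H1 ?H2 ?addr0.
  move/ddualP => H; split; apply/ddualP => g gC; apply: H.
    exact: (subvP (addvSl _ _)).
  exact: (subvP (addvSr _ _)).
have h1 := dim_ddual (C + conjc q C j).
have h2 := dimv_sum_cap C (conjc q C j).
rewrite dim_conj in h2.
move: h1 h2; set a := \dim (ddual q _); set b := \dim (_ + _)%VS.
set c := \dim (_ :&: _)%VS; set d := \dim C; lia.
Qed.

End Frob.

Theorem proposition4p1 (L : finFieldType) (q n : nat)
    (hq : exists p e : nat, prime p /\ q = (p ^ e.+1)%N)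
    (hn : (0 < n)%N) (hL : #|L| = (q ^ n)%N)
    (C : {vspace 'rV[L]_n}) (k : nat) (hk : \dim C = k) :
  (forall i : 'I_n, ddual q (conjc q C i) = conjc q (ddual q C) i) /\
  ((1 < n)%N ->
     ((hinv q (ddual q C))%:Z = n%:Z - 2%:Z * k%:Z + (hinv q C)%:Z)%R).
Proof.
have [p [e [pp qe]]] := hq.
have pc : p \in GRing.pchar L.
  by apply: (@card_finPcharP _ p (e.+1 * n)) => //; rewrite hL qe expnM.
have qchar : (GRing.pchar L).-nat q by rewrite qe pnatX (pnatE _ pp) pc.
have q1 : (1 < q)%N.
  rewrite qe; apply: leq_trans (prime_gt1 pp) _.
  by rewrite -{1}(expn1 p) leq_pexp2l // prime_gt0.
split; first by move=> i; apply: (dual_conj qchar q1 hn).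
move=> n1.
rewrite /hinv; subst k.
set P := fun j : 'I_n => (0 < j)%N && coprime j n.
set a := fun j : 'I_n => \dim (ddual q C :&: conjc q (ddual q C) j).
set b := fun j : 'I_n => \dim (C :&: conjc q C j).
have T : forall j, (a j + 2 * \dim C = n + b j)%N by move=> j; exact: term_eq.
have j0P : P (Ordinal n1) by rewrite /P /= coprime1n.
set A := \max_(j | P j) a j; set B := \max_(j | P j) b j.
have aA : forall j, P j -> (a j <= A)%N by move=> j Pj; exact: leq_bigmax_cond.
have bB : forall j, P j -> (b j <= B)%N by move=> j Pj; exact: leq_bigmax_cond.
have H1 : (A <= n + B - 2 * \dim C)%N.
  apply/bigmax_leqP => j Pj; have := T j; have := bB j Pj; lia.
have H2 : (B <= A + 2 * \dim C - n)%N.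
  apply/bigmax_leqP => j Pj; have := T j; have := aA j Pj; lia.
have := T (Ordinal n1); have := aA _ j0P; have := bB _ j0P.
move: H1 H2; lia.
Qed.
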